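(* Let $A$ be an $n\times n$ (real or complex) matrix and let $\sigma_1,\ldots,\sigma_{ns}$ be scalars such that each shifted matrix $A-\sigma_i I$ is nonsingular. Suppose that for each $i=1,\ldots,ns$ we have a current approximate solution $\tilde x_{0,i}$ to a shifted system, so that the remaining problem is $(A-\sigma_i I)(x_i-\tilde x_{0,i}) = r_{0,i}$, where the residuals satisfy $r_{0,i}=\beta_i r_{0,1}$ for scalars $\beta_i$, $i=2,\ldots,ns$ (and $\beta_1=1$). Let $z_1,\ldots,z_k$ be eigenvectors of $A$ and let $Z_k$ be the $n\times k$ matrix with columns $z_1,\ldots,z_k$. For each $i$, perform the minimum residual (minres) projection of the $i$-th system over $\mathrm{Span}\{z_1,\ldots,z_k\}$: choose $d_i$ minimizing $\|r_{0,i}-(A-\sigma_i I)Z_k d_i\|_2$, and set the new approximate solution $\tilde x_{0,i}+Z_k d_i$ with new residual $r_i = r_{0,i}-(A-\sigma_i I)Z_k d_i$. Then the new residual vectors $r_1,\ldots,r_{ns}$ are all scalar multiples of one another (they are parallel).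
   Context: This concerns solving multiply shifted linear systems $(A-\sigma_i I)x_i=b$ with a common right-hand side; $\|\cdot\|_2$ is the Euclidean norm. The minres projection over a subspace spanned by the columns of a matrix $W$ for the system $(A-\sigma I)(x-\tilde x_0)=r_0$ replaces $\tilde x_0$ by $\tilde x_0+Wd$ where $d$ minimizes $\|r_0-(A-\sigma I)Wd\|_2$. *)

(* Defs.v *)
From HB Require Import structures.
From mathcomp Require Import all_boot all_order all_algebra.
Set Implicit Arguments. Unset Strict Implicit. Unset Printing Implicit Defensive.
Import Order.TTheory GRing.Theory Num.Theory.
Local Open Scope ring_scope.

(* Scalars: C : numClosedFieldType (e.g. algC, complex R); covers real and
   complex matrices.  Vectors are column vectors 'cV[C]_n. *)

Definition enorm (C : numClosedFieldType) (n : nat) (v : 'cV[C]_n) : C :=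
  sqrtC (\sum_(i < n) `|v i 0| ^+ 2).

Definition eigenvector (C : numClosedFieldType) (n : nat) (A : 'M[C]_n) (z : 'cV[C]_n) : Prop :=
  z != 0 /\ exists lambda : C, A *m z = lambda *: z.

Definition minres_resid (C : numClosedFieldType) (n k : nat) (A : 'M[C]_n) (sigma : C)
  (W : 'M[C]_(n, k)) (r0 : 'cV[C]_n) (d : 'cV[C]_k) : 'cV[C]_n :=
  r0 - (A - sigma%:M) *m W *m d.

Definition minres_minimizer (C : numClosedFieldType) (n k : nat) (A : 'M[C]_n) (sigma : C)
  (W : 'M[C]_(n, k)) (r0 : 'cV[C]_n) (d : 'cV[C]_k) : Prop :=
  forall d' : 'cV[C]_k,
    enorm (minres_resid A sigma W r0 d) <= enorm (minres_resid A sigma W r0 d').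

(* Main.v *)
Require Import Defs.
From HB Require Import structures.
From mathcomp Require Import all_boot all_order all_algebra.
From mathcomp Require Import ring.
Import Order.TTheory GRing.Theory Num.Theory.
Local Open Scope ring_scope.

Definition NN {C : numClosedFieldType} {n : nat} (v : 'cV[C]_n) : C := \sum_(i < n) `|v i 0| ^+ 2.
Definition ip {C : numClosedFieldType} {n : nat} (w v : 'cV[C]_n) : C := \sum_(i < n) (w i 0)^* * v i 0.

Lemma NN_ge0 {C : numClosedFieldType} {n : nat} (v : 'cV[C]_n) : 0 <= NN v.
Proof. by apply: sumr_ge0 => i _; rewrite exprn_ge0. Qed.

Lemma NN_expand {C : numClosedFieldType} {n : nat} (r w : 'cV[C]_n) t :
  NN (r - t *: w) = NN r - t^* * ip w r - t * (ip w r)^* + t * t^* * NN w.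
Proof.
rewrite /NN /ip rmorph_sum /= !mulr_sumr -!sumrN -!big_split /=.
apply: eq_bigr => j _; rewrite !mxE !normCK rmorphB rmorphM /= !rmorphM /= conjCK.
ring.
Qed.

Lemma ipvv {C : numClosedFieldType} {n : nat} (v : 'cV[C]_n) : ip v v = NN v.
Proof. by apply: eq_bigr => j _; rewrite normCK mulrC. Qed.

Lemma NN_eq0 {C : numClosedFieldType} {n : nat} (v : 'cV[C]_n) : NN v = 0 -> v = 0.
Proof.
move=> h; apply/matrixP => p q; rewrite (ord1 q) mxE.
have := @psumr_eq0P _ _ xpredT (fun i => `|v i 0| ^+ 2) (fun i _ => exprn_ge0 2 (normr_ge0 (v i 0))) h p isT.
by move/eqP; rewrite expf_eq0 /= normr_eq0 => /eqP.
Qed.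

Lemma orth_min {C : numClosedFieldType} {n : nat} (r w : 'cV[C]_n) : (forall t, NN r <= NN (r - t *: w)) -> ip w r = 0.
Proof.
move=> h; have [w0|wn0] := eqVneq (NN w) 0.
  by rewrite (NN_eq0 w w0) /ip big1 // => j _; rewrite mxE rmorph0 mul0r.
set a := ip w r.
have Nr : NN w \is Num.real by apply: ger0_real; exact: NN_ge0.
have cN : (NN w)^* = NN w by rewrite geC0_conj // NN_ge0.
have cV : ((NN w)^-1)^* = (NN w)^-1 by rewrite geC0_conj // invr_ge0 NN_ge0.
have := h (a / NN w); rewrite NN_expand rmorphM /= cV -/a.
have -> : NN r - a^* / NN w * a - a / NN w * a^* + a / NN w * (a^* / NN w) * NN w
   = NN r - (a * a^*) / NN w by field.
rewrite -subr_ge0 addrAC subrr add0r oppr_ge0 -normCK => hle.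
have hge : 0 <= `|a| ^+ 2 / NN w by rewrite divr_ge0 ?exprn_ge0 ?NN_ge0.
have : `|a| ^+ 2 / NN w = 0 by apply/eqP; rewrite eq_le hle hge.
move/eqP; rewrite mulf_eq0 invr_eq0 (negbTE wn0) orbF expf_eq0 /= normr_eq0.
by move/eqP.
Qed.

Lemma ipBZ {C : numClosedFieldType} {n : nat} (w x y : 'cV[C]_n) c :
  ip w (x - c *: y) = ip w x - c * ip w y.
Proof.
rewrite /ip mulr_sumr -sumrN -big_split /=; apply: eq_bigr => j _.
rewrite !mxE; ring.
Qed.

Lemma enormE {C : numClosedFieldType} {n : nat} (v : 'cV[C]_n) : enorm v = sqrtC (NN v).
Proof. by []. Qed.

Theorem theorem4p1 (C : numClosedFieldType) (n k ns : nat) (hns : (0 < ns)%N)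
  (A : 'M[C]_n) (sigma : 'I_ns -> C)
  (hnonsing : forall i, A - (sigma i)%:M \in unitmx)
  (r0 : 'I_ns -> 'cV[C]_n) (beta : 'I_ns -> C)
  (hbeta1 : beta (Ordinal hns) = 1)
  (hr0 : forall i, r0 i = beta i *: r0 (Ordinal hns))
  (Z : 'M[C]_(n, k)) (hZ : forall j : 'I_k, eigenvector A (col j Z))
  (d : 'I_ns -> 'cV[C]_k)
  (hd : forall i, minres_minimizer A (sigma i) Z (r0 i) (d i)) :
  forall i, exists c : C,
    minres_resid A (sigma i) Z (r0 i) (d i)
    = c *: minres_resid A (sigma (Ordinal hns)) Z (r0 (Ordinal hns)) (d (Ordinal hns)).
Proof.
move=> i.
have [lam hlam] : exists lam : 'I_k -> C, forall j, A *m col j Z = lam j *: col j Z.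
  apply: (@fin_all_exists _ (fun _ => C) (fun j l => A *m col j Z = l *: col j Z)) => j.
  by case: (hZ j).
have AZ : A *m Z = Z *m diag_mx (\row_j lam j).
  apply/matrixP => p j.
  have -> : (A *m Z) p j = (A *m col j Z) p 0.
    by rewrite !mxE; apply: eq_bigr => q _; rewrite mxE.
  by rewrite hlam mul_mx_diag !mxE mulrC.
have hne : forall i' j, lam j - sigma i' != 0.
  move=> i' j; apply/negP => /eqP h0.
  have hB : (A - (sigma i')%:M) *m col j Z = 0.
    by rewrite mulmxBl hlam mul_scalar_mx -scalerBl h0 scale0r.
  have := mulKmx (hnonsing i') (col j Z); rewrite hB mulmx0 => e.
  by case: (hZ j); rewrite -e eqxx.
pose D i' := diag_mx (\row_j (lam j - sigma i')).
have BZ : forall i', (A - (sigma i')%:M) *m Z = Z *m D i'.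
  move=> i'; rewrite mulmxBl AZ mul_scalar_mx; apply/matrixP => p j.
  by rewrite /D !mul_mx_diag !mxE; ring.
have surj : forall i' (u : 'cV[C]_k), exists y, (A - (sigma i')%:M) *m Z *m y = Z *m u.
  move=> i' u; exists (\col_j (u j 0 / (lam j - sigma i'))).
  rewrite BZ -mulmxA; congr (_ *m _); apply/matrixP => p q.
  by rewrite /D mul_diag_mx !mxE (ord1 q) mulrC divfK.
have orth : forall i' (u : 'cV[C]_k),
    ip (Z *m u) (minres_resid A (sigma i') Z (r0 i') (d i')) = 0.
  move=> i' u; apply: orth_min => t.
  have [y hy] := surj i' u.
  have := hd i' (d i' + t *: y); rewrite !enormE ler_sqrtC ?nnegrE ?NN_ge0 //.
  by rewrite /minres_resid mulmxDr -scalemxAr hy opprD addrA.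
exists (beta i).
set ri := minres_resid _ _ _ _ _.
set r1 := minres_resid _ _ _ _ _.
set u := beta i *: (D (Ordinal hns) *m d (Ordinal hns)) - D i *m d i.
have hdelta : ri - beta i *: r1 = Z *m u.
  rewrite /ri /r1 /minres_resid {1}(hr0 i) !BZ -!mulmxA /u mulmxBr -scalemxAr scalerBr.
  by rewrite opprB addrC addrA subrK.
have : NN (ri - beta i *: r1) = 0.
  rewrite -ipvv {1}hdelta ipBZ orth.
  by rewrite /r1 orth mulr0 subrr.
by move/NN_eq0/eqP; rewrite subr_eq0 => /eqP.
Qed.
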